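(* Consider the online block packing problem with $m$ resources of capacities $B_1,\dots,B_m>0$, and let $x^*=\{x_i^{*t}\}$ be the allocation produced by the greedy fractional algorithm. For every horizon $T\ge 1$ and every (possibly fractional) allocation $y=\{y_i^t\}$ (in particular the optimal offline one), $SW_{[1:T]}(x^* )\ge \tfrac12\, SW_{[1:T]}(y)$.
   Context: Online block packing: there are $m$ resources with block capacities $B_1,\dots,B_m>0$. A set $\mathcal{C}$ of transactions is given; each $i\in\mathcal{C}$ has an arrival time $a_i\in\{1,2,\dots\}$, base value $v_i\ge 0$, discount factor $\rho_i\in[0,1]$ and demand vector $w_i=(w_{i1},\dots,w_{im})\in\mathbb{R}_+^m$. Executing $i$ in block $t\ge a_i$ yields value $v_i^t:=v_i(1-\rho_i)^{t-a_i}$. A (fractional) allocation is a family $x=\{x_i^t\}_{i\in\mathcal{C},t\ge1}$ with $x_i^t\in[0,1]$, $x_i^t=0$ whenever $t<a_i$, $\sum_t x_i^t\le 1$ for all $i$, and $\sum_i w_{ij}x_i^t\le B_j$ for all blocks $t$ and resources $j$; it is integral if all $x_i^t\in\{0,1\}$. Its social welfare up to horizon $T$ is $SW_{[1:T]}(x)=\sum_{t=1}^T\sum_i x_i^t v_i^t$. The greedy fractional algorithm: at each time $t=1,2,\dots$ it sets $\{x_i^{*t}\}_i$ to be an optimal solution of the linear program maximizing $\sum_i x_i^{*t} v_i^t$ subject to $0\le x_i^{*t}\le 1-\sum_{\tau<t}x_i^{*\tau}$ for all $i$, $\sum_i w_{ij}x_i^{*t}\le B_j$ for all $j$, and $x_i^{*t}=0$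 for all $i$ with $a_i>t$. *)

(* Defs.v *)
From mathcomp Require Import all_boot all_order all_algebra.
Set Implicit Arguments. Unset Strict Implicit. Unset Printing Implicit Defensive.
Import Order.TTheory GRing.Theory Num.Theory.
Local Open Scope ring_scope.

(* Transactions are indexed by a finite type I, resources by 'I_m.
   Time t : nat; blocks are t = 1, 2, ...  (a i >= 1 ensures nothing is
   scheduled at t = 0). *)

(* value of executing i in block t (used only for t >= a i) *)
Definition val_at (R : realFieldType) (I : finType) (a : I -> nat) (v rho : I -> R)
  (i : I) (t : nat) : R := v i * (1 - rho i) ^+ (t - a i).

Definition is_allocation (R : realFieldType) (I : finType) (m : nat)
  (B : 'I_m -> R) (a : I -> nat) (w : I -> 'I_m -> R) (x : I -> nat -> R) : Prop :=
  [/\ (forall i t, 0 <= x i t <= 1),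
      (forall i t, (t < a i)%N -> x i t = 0),
      (forall i N, \sum_(t < N) x i t <= 1) &
      (forall t j, (1 <= t)%N -> \sum_(i : I) w i j * x i t <= B j)].

Definition SW (R : realFieldType) (I : finType) (a : I -> nat) (v rho : I -> R)
  (T : nat) (x : I -> nat -> R) : R :=
  \sum_(1 <= t < T.+1) \sum_(i : I) x i t * val_at a v rho i t.

Definition greedy_feasible (R : realFieldType) (I : finType) (m : nat)
  (B : 'I_m -> R) (a : I -> nat) (w : I -> 'I_m -> R) (xs : I -> nat -> R)
  (t : nat) (z : I -> R) : Prop :=
  [/\ (forall i, 0 <= z i <= 1 - \sum_(1 <= tau < t) xs i tau),
      (forall j, \sum_(i : I) w i j * z i <= B j) &
      (forall i, (t < a i)%N -> z i = 0)].

Definition is_greedy (R : realFieldType) (I : finType) (m : nat)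
  (B : 'I_m -> R) (a : I -> nat) (v rho : I -> R) (w : I -> 'I_m -> R)
  (xs : I -> nat -> R) : Prop :=
  forall t, (1 <= t)%N ->
    greedy_feasible B a w xs t (fun i => xs i t) /\
    (forall z, greedy_feasible B a w xs t z ->
       \sum_(i : I) z i * val_at a v rho i t <=
       \sum_(i : I) xs i t * val_at a v rho i t).

(* Main.v *)
Require Import Defs.
From mathcomp Require Import all_boot all_order all_algebra.
From mathcomp Require Import lra.
Import Order.TTheory GRing.Theory Num.Theory.
Local Open Scope ring_scope.

Section K.

Variables (R : realFieldType) (x y v : nat -> R).
Definition ee t := y t - Num.min (y t) (1 - \sum_(1 <= tau < t) x tau).
Hypotheses (hx : forall t, 0 <= x t.+1) (hy : forall t, 0 <= y t.+1)
  (hv : forall t, 0 <= v t.+1) (hvm : forall t, v t.+1 <= v t)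
  (hY : forall k, \sum_(1 <= t < k.+1) y t <= 1)
  (hS : forall t, \sum_(1 <= tau < t) x tau <= 1).

Lemma key_ind k :
  let E := \sum_(1 <= t < k.+1) ee t in
  let X := \sum_(1 <= t < k.+1) x t in
  let Y := \sum_(1 <= t < k.+1) y t in
  let D := \sum_(1 <= t < k.+1) (x t - ee t) * v t in
  [/\ E <= X, E <= Y & (X - E) * v k <= D].
Proof.
elim: k => [|k [IH1 IH2 IH3]] /=.
  by rewrite !big_geq // subrr mul0r.
rewrite !(big_nat_recr k.+1) //=.
set E := \sum_(1 <= t < k.+1) ee t in IH1 IH2 IH3 *.
set X := \sum_(1 <= t < k.+1) x t in IH1 IH2 IH3 *.
set Y := \sum_(1 <= t < k.+1) y t in IH1 IH2 IH3 *.
set D := \sum_(1 <= t < k.+1) (x t - ee t) * v t in IH1 IH2 IH3 *.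
have hY' : Y + y k.+1 <= 1 by have := hY k.+1; rewrite big_nat_recr.
have hS' : X <= 1 := hS k.+1.
have hxk := hx k; have hyk := hy k.
have hvk := hvm k; have hv1 := hv k.
have He : ee k.+1 = y k.+1 - Num.min (y k.+1) (1 - X) by [].
have [He1 He2] : 0 <= ee k.+1 /\ (ee k.+1 <= 0 \/ ee k.+1 = y k.+1 - 1 + X).
  rewrite He; case: (lerP (y k.+1) (1 - X)) => h.
    by rewrite subrr; split; [|left].
  idtac.
  split; [lra|right; lra].
have He3 : ee k.+1 <= y k.+1.
  rewrite He; have : 0 <= Num.min (y k.+1) (1 - X) by rewrite le_min hyk; lra.
  lra.
have HXE1 : E + ee k.+1 <= X + x k.+1.
  case: He2 => He2; lra.
split => //; first lra.
have h1 : (X - E) * v k.+1 <= (X - E) * v k.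
  by apply: ler_wpM2l; lra.
lra.
Qed.

Lemma key T : \sum_(1 <= t < T.+1) ee t * v t <= \sum_(1 <= t < T.+1) x t * v t.
Proof.
case: T => [|T]; first by rewrite !big_geq.
have [h1 _ h3] := key_ind T.+1.
rewrite -subr_ge0 -sumrB.
under eq_bigr do rewrite -mulrBl.
apply: le_trans h3; apply: mulr_ge0; [rewrite subr_ge0; exact: h1 | exact: hv].
Qed.
End K.
Arguments ee {R} x y t.

Theorem theorem1 (R : realFieldType) (I : finType) (m : nat)
  (B : 'I_m -> R) (a : I -> nat) (v rho : I -> R) (w : I -> 'I_m -> R)
  (hB : forall j, 0 < B j)
  (ha : forall i, (1 <= a i)%N)
  (hv : forall i, 0 <= v i)
  (hrho : forall i, 0 <= rho i <= 1)
  (hw : forall i j, 0 <= w i j)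
  (xs : I -> nat -> R)
  (hgreedy : is_greedy B a v rho w xs)
  (T : nat) (hT : (1 <= T)%N)
  (y : I -> nat -> R)
  (hy : is_allocation B a w y) :
  SW a v rho T xs >= 2^-1 * SW a v rho T y.
Proof.
case: hy => hy01 hya hysum hycap.
set S := fun i t => \sum_(1 <= tau < t) xs i tau.
have hxs0 : forall i t, 0 <= xs i t.+1.
  move=> i t; have [[h _ _] _] := hgreedy t.+1 isT.
  by have /andP[] := h i.
have hSle : forall i t, S i t <= 1.
  move=> i [|[|t]]; try by rewrite /S big_geq.
  have [[h _ _] _] := hgreedy t.+1 isT.
  have /andP[_ h2] := h i.
  rewrite /S big_nat_recr //=.
  have h3 : xs i t.+1 <= 1 - S i t.+1 := h2.
  suff : S i t.+1 + xs i t.+1 <= 1 by [].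
  lra.
have hval0 : forall i t, 0 <= val_at a v rho i t.
  move=> i t; rewrite /val_at; apply: mulr_ge0 => //.
  apply: exprn_ge0; have := hrho i; move=> /andP[? ?]; lra.
have hvalm : forall i t, val_at a v rho i t.+1 <= val_at a v rho i t.
  move=> i t; rewrite /val_at; apply: ler_wpM2l => //.
  have /andP[h1 h2] := hrho i.
  apply: ler_wiXn2l; [lra|lra|].
  exact: leq_sub2r.
have hy0 : forall i t, 0 <= y i t by move=> i t; have /andP[] := hy01 i t.
have hY : forall i k, \sum_(1 <= t < k.+1) y i t <= 1.
  move=> i k; have := hysum i k.+1.
  rewrite -(big_mkord xpredT (fun t => y i t)) big_ltn //.
  by rewrite (hya i 0 (ha i)) add0r.
set z := fun i t => Num.min (y i t) (1 - S i t).
have hyz : forall i t, y i t = z i t + ee (xs i) (y i) t.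
  by move=> i t; rewrite /ee /z /S; lra.
have hfeas : forall t, (1 <= t)%N -> greedy_feasible B a w xs t (fun i => z i t).
  move=> t ht; split.
  - move=> i; rewrite /z le_min ge_min hy0 /=; have := hSle i t; rewrite /S => h.
    apply/andP; split; [lra | by rewrite lexx orbT].
  - move=> j; apply: le_trans (hycap t j ht); apply: ler_sum => i _.
    by apply: ler_wpM2l => //; rewrite /z ge_min lexx.
  - move=> i hi; rewrite /z hya //; apply: min_l.
    have := hSle i t; rewrite /S => h; lra.
have -> : SW a v rho T y =
   \sum_(1 <= t < T.+1) \sum_(i : I) z i t * val_at a v rho i t +
   \sum_(i : I) \sum_(1 <= t < T.+1) ee (xs i) (y i) t * val_at a v rho i t.
  rewrite /SW (exchange_big _ (index_enum I)) /= -big_split /=.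
  apply: eq_bigr => t _; rewrite -big_split /=; apply: eq_bigr => i _.
  by rewrite {1}hyz mulrDl.
have H1 : \sum_(1 <= t < T.+1) \sum_(i : I) z i t * val_at a v rho i t <= SW a v rho T xs.
  apply: ler_sum_nat => t /andP[ht _].
  have [_ hopt] := hgreedy t ht.
  exact: hopt (hfeas t ht).
have H2 : \sum_(i : I) \sum_(1 <= t < T.+1) ee (xs i) (y i) t * val_at a v rho i t
   <= SW a v rho T xs.
  rewrite /SW (exchange_big _ _ (index_enum I)) /=.
  apply: ler_sum => i _.
  exact: (@key _ _ _ _ (hxs0 i) (fun t => hy0 i t.+1) (fun t => hval0 i t.+1) (hvalm i) (hY i) (hSle i) T).
lra.
Qed.
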